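(* Let $m\ge 1$, $P,Q\ge 0$ be integers with $N=P+Q\ge1$, let $D$, $F_1,\ldots,F_m$, $\mathcal{E}$, $d$ and $G_F:\mathcal{E}\to\mathcal{E}$ be as described in the context, and assume that the state network of $G_F$ is strongly connected. Then $G_F$ is topologically transitive on $(\mathcal{E},d)$: for any nonempty open sets $U',U''\subseteq\mathcal{E}$ there exists $n_0>0$ with $G_F^{n_0}(U')\cap U''\neq\varnothing$.
   Context: Let $D=\{k\,2^{-Q}: k=0,1,\ldots,2^N-1\}$ be the set of $N$-bit fixed-point numbers; each $x\in D$ is written in binary as $x=x_{P-1}x_{P-2}\ldots x_0.x_{-1}\ldots x_{-Q}$ with digits $x_j\in\{0,1\}$. For $x,y\in D$ let $x\cdot y$, $x+y$ and $\overline{x}$ denote bitwise AND, bitwise OR and bitwise NOT (complement of every one of the $N$ digits), which are again elements of $D$. Let $F_1,\ldots,F_m:D^m\to D$ be arbitrary functions. Let $\Sigma$ be the set of one-sided infinite sequences $w=w^1w^2\ldots$ with $w^k\in D$, and $\sigma:\Sigma\to\Sigma$ the left shift $\sigma(w)=w^2w^3\ldots$. Let $\mathcal{E}=\Sigma^m\times D^m$, with elements $E=((w_1,\ldots,w_m),(x_1,\ldots,x_m))$. Define $G_F:\mathcal{E}\to\mathcal{E}$ by $G_F((w_1,\ldots,w_m),x)=((\sigma(w_1),\ldots,\sigma(w_m)),(H_1,\ldots,H_m))$, where $x=(x_1,\ldots,x_m)$ and $H_i=(x_i\cdot\overline{w_i^1})+(F_i(x)\cdot w_i^1)$ (i.e.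 bit $j$ of $x_i$ is replaced by bit $j$ of $F_i(x)$ exactly when bit $j$ of $w_i^1$ is $1$). The metric on $\mathcal{E}$ is $d(E,\hat E)=\sum_{i=1}^m\sum_{k=1}^\infty \frac{|w_i^k-\hat w_i^k|}{2^{Nk}}+\sqrt{\sum_{i=1}^m (x_i-\hat x_i)^2}$. The state network of $G_F$ is the directed graph whose vertex set is $D^m$, with an edge from $\hat x$ to $\tilde x$ whenever there is some $(w_1,\ldots,w_m)\in\Sigma^m$ such that the $D^m$-component of $G_F((w_1,\ldots,w_m),\hat x)$ equals $\tilde x$. It is strongly connected if every vertex is reachable from every other vertex by a directed path. *)

(* Defs.v *)
From Stdlib Require Import Reals Relations.
From Coquelicot Require Import Coquelicot.
From mathcomp Require Import ssreflect ssrfun ssrbool eqtype ssrnat seq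
  choice fintype finfun bigop.

Set Implicit Arguments.
Unset Strict Implicit.
Unset Printing Implicit Defensive.

(* An N-bit fixed-point number x = x_{P-1}...x_0.x_{-1}...x_{-Q} (N = P+Q)
   is represented by its N digits: the digit x_{j-Q} is (x j) for j : 'I_N. *)
Definition D (N : nat) := {ffun 'I_N -> bool}.

Definition dval (P Q : nat) (x : D (P + Q)) : R :=
  (INR (\sum_(j < P + Q) nat_of_bool (x j) * 2 ^ j)%N / (2 ^ Q)%R)%R.

Definition band N (x y : D N) : D N := [ffun j => x j && y j].
Definition bor  N (x y : D N) : D N := [ffun j => x j || y j].
Definition bnot N (x : D N) : D N := [ffun j => ~~ x j].

(* Sigma: one-sided sequences w = w^1 w^2 ...; here w^(k+1) is (w k). *)
Definition Sigma N := nat -> D N.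
Definition shift N (w : Sigma N) : Sigma N := fun k => w k.+1.

Definition state m N := 'I_m -> D N.

Definition Ecal m N := (('I_m -> Sigma N) * state m N)%type.

Definition GF m N (F : 'I_m -> state m N -> D N) (E : Ecal m N) : Ecal m N :=
  (fun i => shift (E.1 i),
   fun i => bor (band (E.2 i) (bnot (E.1 i 0%N)))
                (band (F i E.2) (E.1 i 0%N))).

Definition dist m P Q (E E' : Ecal m (P + Q)) : R :=
  (\big[Rplus/0%R]_(i < m)
      Series (fun k => Rabs (dval (E.1 i k) - dval (E'.1 i k))
                       / (2 ^ ((P + Q) * k.+1))%R)
   + sqrt (\big[Rplus/0%R]_(i < m) (dval (E.2 i) - dval (E'.2 i)) ^ 2))%R.

Definition d_open m P Q (U : Ecal m (P + Q) -> Prop) : Prop :=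
  forall E, U E -> exists r : R, (0 < r)%R /\
    forall E', (dist E E' < r)%R -> U E'.

Definition state_edge m N (F : 'I_m -> state m N -> D N)
  (x y : state m N) : Prop :=
  exists ws : 'I_m -> Sigma N, (GF F (ws, x)).2 = y.

Definition strongly_connected m N (F : 'I_m -> state m N -> D N) : Prop :=
  forall x y : state m N, clos_refl_trans (state m N) (state_edge F) x y.

Definition topologically_transitive m P Q
  (G : Ecal m (P + Q) -> Ecal m (P + Q)) : Prop :=
  forall U U' : Ecal m (P + Q) -> Prop,
    d_open U -> d_open U' -> (exists E, U E) -> (exists E, U' E) ->
    exists n0 : nat, (0 < n0)%N /\
      exists E, U E /\ U' (Nat.iter n0 G E).

(* Main.v *)
From Coquelicot Require Import Coquelicot.
From Stdlib Require Import Reals Relations Lra FunctionalExtensionality.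
From Coquelicot Require Import Coquelicot.
Require Import Defs.
From mathcomp Require Import ssreflect ssrfun ssrbool eqtype ssrnat seq
  choice fintype finfun bigop.
From mathcomp Require Import zify.
From HB Require Import structures.

Lemma bits_lt n (x : {ffun 'I_n -> bool}) :
  (\sum_(j < n) nat_of_bool (x j) * 2 ^ j < 2 ^ n)%N.
Proof.
elim: n x => [|n IH] x; first by rewrite big_ord0.
rewrite big_ord_recr /= expnS.
have h := IH [ffun j : 'I_n => x (widen_ord (leqnSn n) j)].
rewrite (eq_bigr (fun j : 'I_n => (nat_of_bool (x (widen_ord (leqnSn n) j)) * 2 ^ j)%N)) in h;
  last by move=> j _; rewrite ffunE.
 case: (x ord_max) => /=; rewrite ?mul1n ?mul0n; lia.
Qed.

Lemma dval_bnd (P Q : nat) (x : D (P + Q)%N) : (0 <= dval x)%R /\ (dval x <= pow 2 (P + Q)%N)%R.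
Proof.
rewrite /dval.
have h := @bits_lt _ x.
have hQ : (1 <= 2 ^ Q)%R by apply: pow_R1_Rle; lra.
have h1 : (INR (\sum_(j < P + Q) nat_of_bool (x j) * 2 ^ j) <= 2 ^ (P + Q))%R.
  rewrite -[(2 ^ (P + Q))%R](_ : INR (2 ^ (P + Q))%N = _).
    apply: le_INR; apply/leP; exact: ltnW.
  elim: (P + Q)%N => [|k IH] //; rewrite expnS /= -IH.
  by rewrite mult_INR.
have h0 := pos_INR (\sum_(j < P + Q) nat_of_bool (x j) * 2 ^ j).
split.
  apply: Rmult_le_pos => //; apply: Rlt_le; apply: Rinv_0_lt_compat; lra.
apply: (Rle_trans _ (INR (\sum_(j < P + Q) nat_of_bool (x j) * 2 ^ j))) => //.
rewrite /Rdiv -{2}[INR _]Rmult_1_r; apply: Rmult_le_compat_l => //.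
rewrite -Rinv_1; apply: Rinv_le_contravar; lra.
Qed.

Lemma absdiff_le a b M : (0 <= a <= M)%R -> (0 <= b <= M)%R -> (Rabs (a - b) <= M)%R.
Proof. move=> ha hb; unfold Rabs; destruct Rcase_abs; lra. Qed.

Lemma term_bnd (P Q : nat) (hN : (1 <= P + Q)%N) (u v : D (P + Q)%N) k :
  (0 <= Rabs (dval u - dval v) / (2 ^ ((P + Q) * k.+1))%R <= (/2) ^ k)%R.
Proof.
have [hu1 hu2] := @dval_bnd P Q u; have [hv1 hv2] := @dval_bnd P Q v.
have hd := @absdiff_le _ _ _ (conj hu1 hu2) (conj hv1 hv2).
have p1 : (0 < 2 ^ (P + Q)%N)%R by apply: pow_lt; lra.
have p2 : (0 < 2 ^ ((P + Q) * k)%N)%R by apply: pow_lt; lra.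
have p3 : (2 ^ k <= 2 ^ ((P + Q) * k)%N)%R.
  apply: Rle_pow; first lra. apply/leP; rewrite -{1}[k]mul1n; exact: leq_mul.
have p4 : (0 < 2 ^ k)%R by apply: pow_lt; lra.
rewrite mulnS pow_add pow_inv; split.
  apply: Rmult_le_pos; first exact: Rabs_pos.
  apply: Rlt_le; apply: Rinv_0_lt_compat; nra.
rewrite /Rdiv Rinv_mult.
apply: (Rle_trans _ (2 ^ (P + Q)%N * (/ 2 ^ (P + Q)%N * / 2 ^ ((P + Q) * k)%N))%R).
  apply: Rmult_le_compat_r => //.
  apply: Rmult_le_pos; apply: Rlt_le; apply: Rinv_0_lt_compat; lra.
rewrite -Rmult_assoc Rinv_r; last lra.
rewrite Rmult_1_l; apply: Rinv_le_contravar => //.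
Qed.

Lemma sum_f_zero (a : nat -> R) n : (forall k, (k <= n)%N -> a k = 0%R) -> sum_f_R0 a n = 0%R.
Proof.
elim: n => [|n IH] h /=; first exact: h.
rewrite IH ?h //; first lra. by move=> k hk; apply: h; apply: leqW.
Qed.

Lemma series_bnd (P Q : nat) (hN : (1 <= P + Q)%N) (u v : Sigma (P + Q)%N) K :
  (0 < K)%N -> (forall k, (k < K)%N -> u k = v k) ->
  (Series (fun k => Rabs (dval (u k) - dval (v k)) / (2 ^ ((P + Q) * k.+1))%R)
    <= 2 * (/2) ^ K)%R.
Proof.
move=> hK huv.
set a := fun k => _.
have ha : forall k, (0 <= a k <= (/2) ^ k)%R by move=> k; apply: term_bnd.
have hg : is_series (fun k => (/2) ^ k)%R 2%R.
  have h2 : (Rabs (/2) < 1)%R by rewrite Rabs_pos_eq; lra.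
  have := @is_series_geom _ h2.
  by replace (/ (1 - /2))%R with 2%R by field.
have ea : ex_series a.
  apply: (ex_series_le _ (fun k => (/2) ^ k)%R); last by exists 2%R.
  move=> n; change (norm (a n)) with (Rabs (a n)); rewrite Rabs_pos_eq; apply ha.
rewrite (Series_incr_n _ K) //; last by apply/ltP.
rewrite sum_f_zero; last first.
  move=> k hk; rewrite /a huv; last by rewrite -(ltn_predK hK) ltnS.
  rewrite Rminus_diag Rabs_R0 /Rdiv Rmult_0_l //.
rewrite Rplus_0_l.
have hg2 : is_series (fun k => (/2) ^ K * (/2) ^ k)%R ((/2) ^ K * 2)%R.
  exact: (@is_series_scal_l R_AbsRing R_NormedModule ((/2) ^ K)%R _ _ hg).
rewrite (_ : (2 * (/2) ^ K = (/2) ^ K * 2)%R); last by ring.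
rewrite -(is_series_unique _ _ hg2).
apply: Series_le; last by exists ((/2) ^ K * 2)%R.
move=> n; split; first by case: (ha (K + n)%N).
rewrite -pow_add; by case: (ha (K + n)%N).
Qed.

Definition stepF m N (F : 'I_m -> state m N -> D N) (a : 'I_m -> D N) (x : state m N)
  : state m N :=
  fun i => bor (band (x i) (bnot (a i))) (band (F i x) (a i)).
Arguments stepF {m N}.

Definition run m N (F : 'I_m -> state m N -> D N) (l : seq ('I_m -> D N)) x :=
  foldl (fun x a => stepF F a x) x l.
Arguments run {m N}.

Definition d0 m N : 'I_m -> D N := fun _ => [ffun _ => false].

Definition mk m N (p : seq ('I_m -> D N)) (w : 'I_m -> Sigma N) : 'I_m -> Sigma N :=
  fun i k => if (k < size p)%N then nth (@d0 m N) p k i else w i (k - size p)%N.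
Arguments mk {m N}.

Lemma iter_mk m N (F : 'I_m -> state m N -> D N) p w x :
  Nat.iter (size p) (GF F) (mk p w, x) = (w, run F p x).
Proof.
elim: p x => [|a p IH] x.
  rewrite /=; congr pair; apply: functional_extensionality => i;
  apply: functional_extensionality => k; by rewrite /mk /= subn0.
rewrite [size _]/= Nat.iter_succ_r -IH; by congr Nat.iter.
Qed.

Lemma path_run m N (F : 'I_m -> state m N -> D N) x y :
  clos_refl_trans (state m N) (state_edge F) x y -> exists l, run F l x = y.
Proof.
elim => [a b [ws <-]|a|a b c _ [l1 h1] _ [l2 h2]].
- by exists [:: fun i => ws i 0%N].
- by exists [::].
- exists (l1 ++ l2); by rewrite /run foldl_cat -/(run F l1 a) h1.
Qed.

HB.instance Definition _ := Monoid.isComLaw.Build R 0%R Rplus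
  (fun a b c => esym (Rplus_assoc a b c)) Rplus_comm Rplus_0_l.

Lemma sum_le n (f : 'I_n -> R) c : (forall i, f i <= c)%R ->
  (\big[Rplus/0%R]_(i < n) f i <= INR n * c)%R.
Proof.
elim: n f => [|n IH] f h; first by rewrite big_ord0 /=; lra.
rewrite big_ord_recr S_INR /=.
rewrite Rmult_plus_distr_r Rmult_1_l.
apply: Rplus_le_compat; last exact: h.
exact: (IH (fun i => f (widen_ord (leqnSn n) i)) (fun i => h _)).
Qed.

Lemma sum_zero n (f : 'I_n -> R) : (forall i, f i = 0)%R ->
  (\big[Rplus/0%R]_(i < n) f i = 0)%R.
Proof. move=> h; elim/big_rec: _ => // i x _ ->; rewrite h; lra. Qed.

Theorem theorem2 (m P Q : nat) (hm : (1 <= m)%N) (hN : (1 <= P + Q)%N)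
  (F : 'I_m -> state m (P + Q) -> D (P + Q)) :
  strongly_connected F ->
  topologically_transitive (m := m) (P := P) (Q := Q) (GF F).
Proof.
move=> SC U U' oU oU' [[w x] hE] [[w' x'] hE'].
have [r [hr hball]] := oU _ hE.
have hm' : (0 < INR m)%R by apply: lt_0_INR; apply/ltP.
have [K0 hK0] : exists K0, forall n, (n >= K0)%coq_nat -> (Rabs ((/2) ^ n) < r / (2 * INR m))%R.
  apply: pow_lt_1_zero; first by rewrite Rabs_pos_eq; lra.
  apply: Rdiv_lt_0_compat => //; lra.
set K := maxn K0 1.
have hK : (0 < K)%N by rewrite leq_max orbT.
have hKb := hK0 K (leP (leq_maxl K0 1)).
rewrite Rabs_pos_eq in hKb; last by apply: pow_le; lra.
set p1 := [seq (fun i => w i k) | k <- iota 0 K].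
have [l hl] := @path_run _ _ F _ _ (SC (run F p1 x) x').
set p := p1 ++ l.
have hs1 : size p1 = K by rewrite /p1 size_map size_iota.
exists (size p); split.
  by rewrite /p size_cat hs1; apply: leq_trans hK (leq_addr _ _).
exists (mk p w', x); split; last by rewrite iter_mk /run /p foldl_cat -/(run F p1 x) -/(run F l _) hl.
apply: hball; rewrite /dist /=.
rewrite (@sum_zero _ (fun i => (dval (x i) - dval (x i)) ^ 2)%R); last by move=> i; ring.
rewrite sqrt_0 Rplus_0_r.
apply: (Rle_lt_trans _ (INR m * (2 * (/ 2) ^ K))%R).
  apply: sum_le => i; apply: series_bnd => // k hk.
  rewrite /mk /p size_cat hs1 (leq_trans hk (leq_addr _ _)) nth_cat hs1 hk.
  by rewrite /p1 (nth_map 0%N) ?size_iota // nth_iota.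
have : (INR m * (2 * (/2) ^ K) < INR m * (2 * (r / (2 * INR m))))%R.
  apply: Rmult_lt_compat_l => //; lra.
have -> : (INR m * (2 * (r / (2 * INR m))) = r)%R by field; lra.
done.
Qed.
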